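(* Let $\Lambda$ be the groupoid of Markov shifts and $E$ the set of elementary conjugacies. Then the map $\mathcal N(\Lambda,E)\to\mathrm{SSE}(\{0,1\})$ sending $X_A\mapsto A$ and $\varphi\mapsto(R_\varphi,S_\varphi)$ (so that a simplex given by elementary conjugacies $\varphi_{i,j}:X_{B_i}\to X_{B_j}$ is sent to the simplex given by the pairs $(R_{\varphi_{i,j}},S_{\varphi_{i,j}})$) is an isomorphism of simplicial sets.
   Context: Non-degenerate: no zero rows or columns. For a non-degenerate $A\in\{0,1\}^{n\times n}$, $X_A=\{x\in\{1,\dots,n\}^{\mathbb Z}:A_{x_\ell,x_{\ell+1}}=1\ \forall\ell\}$ with the left shift. $\Lambda$ has as objects the shifts $X_A$ for non-degenerate square $\{0,1\}$-matrices $A$, and as morphisms shift-commuting homeomorphisms. A conjugacy $\varphi:X_A\to X_B$ is elementary if there are $\varphi_{\mathrm{loc}}$, $\varphi^{-1}_{\mathrm{loc}}$ (on allowed pairs) with $\varphi(x)_i=\varphi_{\mathrm{loc}}(x_i,x_{i+1})$ and $\varphi^{-1}(y)_i=\varphi^{-1}_{\mathrm{loc}}(y_{i-1},y_i)$. $(R_\varphi)_{a,b}=1$ iff $\varphi_{\mathrm{loc}}(a,a')=b$ for some allowed $a'$; $(S_\varphi)_{b,a}=1$ iff $\varphi^{-1}_{\mathrm{loc}}(b,b')=a$ for some allowed $b'$. The nerve $\mathcal N(\Lambda,E)$ is the simplicial set whose $n$-simplices are tuples of objects $(X_0,\dots,X_n)$ with morphisms $\varphi_{i,j}:X_i\to X_j$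 in $E$ ($i<j$) such that $\varphi_{j,k}\circ\varphi_{i,j}=\varphi_{i,k}$ for $i<j<k$. $\mathrm{SSE}(\{0,1\})$ has as $n$-simplices tuples $(B_0,\dots,B_n)$ of non-degenerate square $\{0,1\}$-matrices with non-degenerate $\{0,1\}$-matrices $R^{i,j},S^{i,j}$ ($i<j$), $B_i=R^{i,j}S^{i,j}$, $B_j=S^{i,j}R^{i,j}$, and for $i<j<k$: $R^{i,j}R^{j,k}=R^{i,k}$, $R^{j,k}S^{i,k}=S^{i,j}$, $S^{i,k}R^{i,j}=S^{j,k}$. Face maps in both delete a vertex. *)

(* Defs.v *)
From mathcomp Require Import all_boot all_algebra.
From Stdlib Require Import ClassicalEpsilon.

Set Implicit Arguments.
Unset Strict Implicit.
Unset Printing Implicit Defensive.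

(* Matrices: {0,1}-matrices are represented as nat-matrices whose      *)
(* entries are <= 1; products are the usual (integer) matrix products. *)
(* The alphabet {1,...,n} is represented by 'I_n = {0,...,n-1}.        *)

Definition zo (m n : nat) (M : 'M[nat]_(m, n)) : Prop :=
  forall i j, M i j <= 1.

Definition nondeg (m n : nat) (M : 'M[nat]_(m, n)) : Prop :=
  (forall i, exists j, M i j != 0) /\ (forall j, exists i, M i j != 0).

Definition goodmx (n : nat) (A : 'M[nat]_n) : Prop := zo A /\ nondeg A.

Definition seqs (n : nat) := int -> 'I_n.

Definition inX (n : nat) (A : 'M[nat]_n) (x : seqs n) : Prop :=
  forall l : int, A (x l) (x (l + 1)%R) = 1.

Definition pt (n : nat) (A : 'M[nat]_n) := {x : seqs n | inX A x}.

Definition shseq (n : nat) (x : seqs n) : seqs n := fun l => x (l + 1)%R.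

Definition shpt (n : nat) (A : 'M[nat]_n) (p : pt A) : pt A :=
  exist (inX A) (shseq (proj1_sig p)) (fun l => proj2_sig p (l + 1)%R).

Definition Xset (n : nat) (A : 'M[nat]_n) (y : int -> nat) : Prop :=
  exists x : seqs n, inX A x /\ y = (fun l => nat_of_ord (x l)).

(* Topology: product topology of discrete spaces, restricted to X_A.   *)

Definition agree (n : nat) (x y : seqs n) (N : nat) : Prop :=
  forall l : int, (absz l <= N)%N -> x l = y l.

Definition cont (n m : nat) (A : 'M[nat]_n) (B : 'M[nat]_m) (f : pt A -> pt B) : Prop :=
  forall (p : pt A) (N : nat), exists M : nat, forall q : pt A,
    agree (proj1_sig p) (proj1_sig q) M ->
    agree (proj1_sig (f p)) (proj1_sig (f q)) N.

Definition conjugacy (n m : nat) (A : 'M[nat]_n) (B : 'M[nat]_m) (phi : pt A -> pt B) : Prop :=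
  exists psi : pt B -> pt A,
    cancel phi psi /\ cancel psi phi /\ cont phi /\ cont psi /\
    (forall p, phi (shpt p) = shpt (phi p)).

Definition locrule (n m : nat) (A : 'M[nat]_n) (B : 'M[nat]_m) (phi : pt A -> pt B)
  (floc : 'I_n -> 'I_n -> 'I_m) : Prop :=
  forall (p : pt A) (i : int),
    proj1_sig (phi p) i = floc (proj1_sig p i) (proj1_sig p (i + 1)%R).

Definition invlocrule (n m : nat) (A : 'M[nat]_n) (B : 'M[nat]_m) (phi : pt A -> pt B)
  (gloc : 'I_m -> 'I_m -> 'I_n) : Prop :=
  forall (p : pt A) (i : int),
    proj1_sig p i = gloc (proj1_sig (phi p) (i - 1)%R) (proj1_sig (phi p) i).

Definition elementary (n m : nat) (A : 'M[nat]_n) (B : 'M[nat]_m) (phi : pt A -> pt B) : Prop :=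
  conjugacy phi /\ (exists floc, locrule phi floc) /\ (exists gloc, invlocrule phi gloc).

Definition Rprop (n m : nat) (A : 'M[nat]_n) (B : 'M[nat]_m) (phi : pt A -> pt B)
  (a : 'I_n) (b : 'I_m) : Prop :=
  exists floc, locrule phi floc /\ exists a' : 'I_n, A a a' = 1 /\ floc a a' = b.

Definition Sprop (n m : nat) (A : 'M[nat]_n) (B : 'M[nat]_m) (phi : pt A -> pt B)
  (b : 'I_m) (a : 'I_n) : Prop :=
  exists gloc, invlocrule phi gloc /\ exists b' : 'I_m, B b b' = 1 /\ gloc b b' = a.

Definition ind (P : Prop) : nat := if excluded_middle_informative P then 1 else 0.

Definition Rmat (n m : nat) (A : 'M[nat]_n) (B : 'M[nat]_m) (phi : pt A -> pt B)
  : 'M[nat]_(n, m) := \matrix_(a, b) ind (Rprop phi a b).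

Definition Smat (n m : nat) (A : 'M[nat]_n) (B : 'M[nat]_m) (phi : pt A -> pt B)
  : 'M[nat]_(m, n) := \matrix_(b, a) ind (Sprop phi b a).

(* An object X_A is recorded by its matrix A (cf. objinj in the        *)
(* theorem, which shows that X_A determines A).                        *)

Record nsimp (k : nat) := NSimp {
  nsz : 'I_k.+1 -> nat;
  nA : forall i, 'M[nat]_(nsz i);
  nphi : forall i j : 'I_k.+1, i < j -> pt (nA i) -> pt (nA j)
}.

Arguments nsz {k} n i.
Arguments nA {k} n i.
Arguments nphi {k} n {i j} h.

Definition nvalid (k : nat) (x : nsimp k) : Prop :=
  (forall i, goodmx (nA x i)) /\
  (forall i j : 'I_k.+1, forall h : i < j, elementary (nphi x h)) /\
  (forall i j l : 'I_k.+1, forall (hij : i < j) (hjl : j < l) (hil : i < l) (p : pt (nA x i)),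
      nphi x hjl (nphi x hij p) = nphi x hil p).

Record ssimp (k : nat) := SSimp {
  ssz : 'I_k.+1 -> nat;
  sB : forall i, 'M[nat]_(ssz i);
  sR : forall i j : 'I_k.+1, i < j -> 'M[nat]_(ssz i, ssz j);
  sS : forall i j : 'I_k.+1, i < j -> 'M[nat]_(ssz j, ssz i)
}.

Arguments ssz {k} s i.
Arguments sB {k} s i.
Arguments sR {k} s {i j} h.
Arguments sS {k} s {i j} h.

Definition svalid (k : nat) (s : ssimp k) : Prop :=
  (forall i, goodmx (sB s i)) /\
  (forall i j : 'I_k.+1, forall h : i < j,
      zo (sR s h) /\ nondeg (sR s h) /\ zo (sS s h) /\ nondeg (sS s h) /\
      sB s i = (sR s h *m sS s h)%R /\ sB s j = (sS s h *m sR s h)%R) /\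
  (forall i j l : 'I_k.+1, forall (hij : i < j) (hjl : j < l) (hil : i < l),
      (sR s hij *m sR s hjl)%R = sR s hil /\
      (sR s hjl *m sS s hil)%R = sS s hij /\
      (sS s hil *m sR s hij)%R = sS s hjl).

Definition Fmap (k : nat) (x : nsimp k) : ssimp k :=
  @SSimp k (nsz x) (nA x)
    (fun i j h => Rmat (nphi x h))
    (fun i j h => Smat (nphi x h)).

(* Simplicial structure: reindexing along a nondecreasing map          *)
(* f : [m] -> [k].  Faces (f = lift i, deleting vertex i) and          *)
(* degeneracies (repeating a vertex, with the identity conjugacy,      *)
(* resp. the pair (I, B)) are the special cases.                       *)

Lemma le_nlt_eq (k : nat) (a b : 'I_k) : a <= b -> (a < b) = false -> a = b.
Proof.
move=> le nlt; apply: val_inj; apply/eqP; rewrite eqn_leq le /=.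
by rewrite leqNgt nlt.
Qed.

Definition nmor (k : nat) (x : nsimp k) (a b : 'I_k.+1) (le : a <= b)
  : pt (nA x a) -> pt (nA x b) :=
  (if a < b as c return (a < b) = c -> pt (nA x a) -> pt (nA x b)
   then fun h => nphi x h
   else fun h p => eq_rect a (fun t => pt (nA x t)) p b (le_nlt_eq le h)) erefl.

Definition smorR (k : nat) (s : ssimp k) (a b : 'I_k.+1) (le : a <= b)
  : 'M[nat]_(ssz s a, ssz s b) :=
  (if a < b as c return (a < b) = c -> 'M[nat]_(ssz s a, ssz s b)
   then fun h => sR s h
   else fun h => eq_rect a (fun t => 'M[nat]_(ssz s a, ssz s t)) (1%:M)%R b (le_nlt_eq le h))
  erefl.

Definition smorS (k : nat) (s : ssimp k) (a b : 'I_k.+1) (le : a <= b)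
  : 'M[nat]_(ssz s b, ssz s a) :=
  (if a < b as c return (a < b) = c -> 'M[nat]_(ssz s b, ssz s a)
   then fun h => sS s h
   else fun h => eq_rect a (fun t => 'M[nat]_(ssz s t, ssz s a)) (sB s a) b (le_nlt_eq le h))
  erefl.

Arguments nmor {k} x {a b} le.
Arguments smorR {k} s {a b} le.
Arguments smorS {k} s {a b} le.

Definition monotone (m k : nat) (f : 'I_m -> 'I_k) : Prop :=
  forall a b : 'I_m, a <= b -> f a <= f b.

Definition nreidx (m k : nat) (f : 'I_m.+1 -> 'I_k.+1) (hf : monotone f) (x : nsimp k)
  : nsimp m :=
  @NSimp m (fun a => nsz x (f a)) (fun a => nA x (f a))
    (fun a b h => nmor x (hf a b (ltnW h))).

Definition sreidx (m k : nat) (f : 'I_m.+1 -> 'I_k.+1) (hf : monotone f) (s : ssimp k)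
  : ssimp m :=
  @SSimp m (fun a => ssz s (f a)) (fun a => sB s (f a))
    (fun a b h => smorR s (hf a b (ltnW h)))
    (fun a b h => smorS s (hf a b (ltnW h))).

(* Main.v *)
Require Import Defs.
From mathcomp Require Import all_boot all_order all_algebra zify.
From Stdlib Require Import ClassicalEpsilon FunctionalExtensionality ProofIrrelevance Eqdep Classical.
Import GRing.Theory Num.Theory.

Set Implicit Arguments.
Unset Strict Implicit.
Unset Printing Implicit Defensive.

Local Notation V p l := (proj1_sig p l).

Lemma pt_eq n (A : 'M[nat]_n) (p q : pt A) :
  (forall l, V p l = V q l) -> p = q.
Proof.
case: p q => [x hx] [y hy] /= H.
have E : x = y by apply: functional_extensionality.
subst; f_equal; apply: proof_irrelevance.
Qed.

Definition mkpt n (A : 'M[nat]_n) (x : seqs n) (h : inX A x) : pt A := exist _ x h.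

Lemma ind1 (P : Prop) : ind P = 1 <-> P.
Proof. by rewrite /ind; case: excluded_middle_informative. Qed.
Lemma ind_le1 (P : Prop) : ind P <= 1.
Proof. by rewrite /ind; case: excluded_middle_informative. Qed.
Lemma ind0 (P : Prop) : ~ P -> ind P = 0.
Proof. by rewrite /ind; case: excluded_middle_informative. Qed.

Lemma zo1 n m (M : 'M[nat]_(n, m)) i j : zo M -> M i j != 0 -> M i j = 1.
Proof. move=> z; have := z i j; case: (M i j) => [|[|]] //. Qed.

Section Pts.
Variables (n : nat) (A : 'M[nat]_n).
Hypothesis hA : goodmx A.

Lemma succ_ex i : exists j, A i j == 1.
Proof.
case: hA => z [r _]; case: (r i) => j hj; exists j; apply/eqP; exact: zo1.
Qed.
Lemma pred_ex j : exists i, A i j == 1.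
Proof.
case: hA => z [_ c]; case: (c j) => i hi; exists i; apply/eqP; exact: zo1.
Qed.
Definition sc i := xchoose (succ_ex i).
Definition pc j := xchoose (pred_ex j).
Lemma scP i : A i (sc i) = 1. Proof. apply/eqP; exact: (xchooseP (succ_ex i)). Qed.
Lemma pcP j : A (pc j) j = 1. Proof. apply/eqP; exact: (xchooseP (pred_ex j)). Qed.

Definition ray (c : 'I_n) : seqs n := fun l =>
  match l with Posz k => iter k sc c | Negz k => iter k.+1 pc c end.

Lemma ray_in c : inX A (ray c).
Proof.
move=> [k|k].
- have -> : (Posz k + 1)%R = Posz k.+1 by lia.
  by rewrite /ray /= scP.
- case: k => [|k].
  + have -> : (Negz 0 + 1)%R = Posz 0 by lia.
    by rewrite /ray /= pcP.
  + have -> : (Negz k.+1 + 1)%R = Negz k by lia.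
    by rewrite /ray /= pcP.
Qed.
Lemma ray0 c : ray c 0 = c. Proof. by []. Qed.

Definition shs (d : int) (x : seqs n) : seqs n := fun l => x (l + d)%R.
Lemma shs_in d x : inX A x -> inX A (shs d x).
Proof.
move=> h l; rewrite /shs.
have -> : (l + 1 + d = (l + d) + 1)%R by lia.
exact: h.
Qed.
Lemma shsE d x l l' : l' = (l + d)%R -> shs d x l = x l'.
Proof. by move=> ->. Qed.

Definition glue (d : int) (x y : seqs n) : seqs n :=
  fun l => if (l <= d)%R then x l else y l.
Lemma glue_in d x y : inX A x -> inX A y -> A (x d) (y (d + 1)%R) = 1 -> inX A (glue d x y).
Proof.
move=> hx hy hxy l; rewrite /glue.
case: (boolP (l <= d)%R) => h1; case: (boolP (l + 1 <= d)%R) => h2.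
- exact: hx.
- have E : l = d by lia.
  by rewrite E.
- exfalso; lia.
- exact: hy.
Qed.
Lemma glueL d x y l : (l <= d)%R -> glue d x y l = x l.
Proof. by rewrite /glue => ->. Qed.
Lemma glueR d x y l : (d < l)%R -> glue d x y l = y l.
Proof. move=> h; rewrite /glue; have -> : (l <= d)%R = false by lia. by []. Qed.

Definition epoint (a a' : 'I_n) : seqs n := glue 0 (ray a) (shs (-1) (ray a')).
Lemma epoint_in a a' : A a a' = 1 -> inX A (epoint a a').
Proof.
move=> h; apply: glue_in; [exact: ray_in | apply: shs_in; exact: ray_in |].
by rewrite ray0 (shsE _ _ (l' := 0)) ?ray0.
Qed.
Lemma epoint0 a a' : epoint a a' 0 = a.
Proof. by rewrite /epoint glueL. Qed.
Lemma epoint1 a a' : epoint a a' 1 = a'.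
Proof. by rewrite /epoint glueR // (shsE _ _ (l' := 0)). Qed.

End Pts.

Section Elem.
Variables (n m : nat) (A : 'M[nat]_n) (B : 'M[nat]_m).
Hypotheses (hA : goodmx A) (hB : goodmx B).
Variables (phi : pt A -> pt B) (psi : pt B -> pt A) (f : 'I_n -> 'I_n -> 'I_m) (g : 'I_m -> 'I_m -> 'I_n).
Hypotheses (c1 : cancel phi psi) (c2 : cancel psi phi) (hf : locrule phi f) (hg : invlocrule phi g).

Lemma fE p l l' : l' = (l + 1)%R -> V (phi p) l = f (V p l) (V p l').
Proof. by move=> ->; apply: hf. Qed.
Lemma gE p l l' : l' = (l - 1)%R -> V p l = g (V (phi p) l') (V (phi p) l).
Proof. by move=> ->; apply: hg. Qed.
Lemma psiE q l l' : l' = (l - 1)%R -> V (psi q) l = g (V q l') (V q l).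
Proof. by move=> ->; rewrite (gE (psi q) (l' := (l - 1)%R)) // c2. Qed.
Lemma edgeA (p : pt A) l l' : l' = (l + 1)%R -> A (V p l) (V p l') = 1.
Proof. by move=> ->; apply: (proj2_sig p). Qed.
Lemma edgeB (p : pt B) l l' : l' = (l + 1)%R -> B (V p l) (V p l') = 1.
Proof. by move=> ->; apply: (proj2_sig p). Qed.

Lemma Rf a b : Rprop phi a b <-> exists a', A a a' = 1 /\ f a a' = b.
Proof.
split.
- move=> [fl [hfl [a' [h e]]]]; exists a'; split => //.
  pose p := mkpt (epoint_in hA h).
  have := hfl p 0; rewrite (fE p (l' := 1)) //= epoint0.
  have -> : (0 + 1)%R = (1 : int) by [].
  by rewrite epoint1 e.
- move=> [a' [h e]]; exists f; split => //; by exists a'.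
Qed.

Lemma Sf b a : Sprop phi b a <-> exists b', B b b' = 1 /\ g b b' = a.
Proof.
split.
- move=> [gl [hgl [b' [h e]]]]; exists b'; split => //.
  pose q := mkpt (shs_in 1 (epoint_in hB h)).
  have := hgl (psi q) 0; rewrite c2 (psiE q (l' := -1)) //=.
  rewrite (shsE _ _ (l' := 0)) // (shsE _ _ (l' := 1)) // epoint0 epoint1.
  by move=> ->.
- move=> [b' [h e]]; exists g; split => //; by exists b'.
Qed.

Lemma K1s a b a'' : Rprop phi a b -> Sprop phi b a'' -> A a a'' = 1 /\ f a a'' = b.
Proof.
move=> /Rf [a' [ha fa]] /Sf [b' [hb gb]].
pose p1 := mkpt (epoint_in hA ha).
have y_in : inX B (glue 0 (proj1_sig (phi p1)) (epoint hB b b')).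
  apply: glue_in; [exact: (proj2_sig (phi p1)) | exact: epoint_in |].
  rewrite (fE p1 (l' := 1)) //= epoint0 epoint1 fa; exact: hb.
pose p := psi (mkpt y_in).
have p0 : V p 0 = a.
  rewrite (psiE _ (l' := -1)) //= !glueL // -(gE p1 (l := 0)) //=.
have p1' : V p 1 = a''.
  rewrite (psiE _ (l' := 0)) //= glueL // glueR // epoint1.
  by rewrite (fE p1 (l' := 1)) //= epoint0 epoint1 fa.
split.
- by rewrite -p0 -p1'; apply: edgeA.
- rewrite -p0 -p1' -(fE p (l := 0)) // /p c2 /= glueL //.
  by rewrite (fE p1 (l' := 1)) //= epoint0 epoint1.
Qed.

Lemma K1e a a'' : A a a'' = 1 -> Rprop phi a (f a a'') /\ Sprop phi (f a a'') a''.
Proof.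
move=> h; split; first by apply/Rf; exists a''.
apply/Sf.
pose p := mkpt (epoint_in hA h).
exists (V (phi p) 1); split.
- rewrite (_ : f a a'' = V (phi p) 0); first by apply: edgeB.
  by rewrite (fE p (l' := 1)) //= epoint0 epoint1.
- rewrite (_ : f a a'' = V (phi p) 0); last by rewrite (fE p (l' := 1)) //= epoint0 epoint1.
  by rewrite -(gE p (l := 1)) //= epoint1.
Qed.

Lemma K2s b a b'' : Sprop phi b a -> Rprop phi a b'' -> B b b'' = 1 /\ g b b'' = a.
Proof.
move=> /Sf [b' [hb gb]] /Rf [a' [ha fa]].
pose q := mkpt (shs_in 1 (epoint_in hB hb)).
pose p1 := psi q.
have p10 : V p1 0 = a.
  by rewrite (psiE _ (l' := -1)) //= (shsE _ _ (l' := 0)) // (shsE _ _ (l' := 1)) // epoint0 epoint1.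
have x_in : inX A (glue 0 (proj1_sig p1) (epoint hA a a')).
  apply: glue_in; [exact: (proj2_sig p1) | exact: epoint_in |].
  by rewrite p10 epoint1.
pose p := mkpt x_in.
have pm1 : V (phi p) (-1)%R = b.
  rewrite (fE p (l' := 0)) //= !glueL // -(fE p1 (l := -1)) // c2 /=.
  by rewrite (shsE _ _ (l' := 0)) // epoint0.
have p0 : V (phi p) 0 = b''.
  by rewrite (fE p (l' := 1)) //= glueL // glueR // p10 epoint1.
split.
- by rewrite -pm1 -p0; apply: edgeB.
- by rewrite -pm1 -p0 -(gE p (l := 0)) //= glueL.
Qed.

Lemma K2e b b'' : B b b'' = 1 -> Sprop phi b (g b b'') /\ Rprop phi (g b b'') b''.
Proof.
move=> h; split; first by apply/Sf; exists b''.
apply/Rf.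
pose q := mkpt (shs_in 1 (epoint_in hB h)).
pose p := psi q.
have p0 : V p 0 = g b b''.
  by rewrite (psiE _ (l' := -1)) //= (shsE _ _ (l' := 0)) // (shsE _ _ (l' := 1)) // epoint0 epoint1.
exists (V p 1); split.
- by rewrite -p0; apply: edgeA.
- rewrite -p0 -(fE p (l := 0)) // /p c2 /=.
  by rewrite (shsE _ _ (l' := 1)) // epoint1.
Qed.

Lemma Rrow a : exists b, Rprop phi a b.
Proof.
pose p := mkpt (ray_in hA a).
exists (V (phi p) 0); apply/Rf; exists (V p 1); split.
- by rewrite -{1}(ray0 hA a); apply: (edgeA p (l := 0)).
- by rewrite (fE p (l' := 1)).
Qed.

Lemma Rcol b : exists a, Rprop phi a b.
Proof.
pose q := mkpt (ray_in hB b).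
pose p := psi q.
exists (V p 0); apply/Rf; exists (V p 1); split.
- exact: (edgeA p (l := 0)).
- by rewrite -(fE p (l := 0)) // /p c2.
Qed.

Lemma Srow b : exists a, Sprop phi b a.
Proof.
pose q := mkpt (shs_in 1 (ray_in hB b)).
pose p := psi q.
exists (V p 0); apply/Sf; exists (V q 0); split.
- have := edgeB q (l := -1) (l' := 0) erefl.
  by rewrite /= (shsE _ _ (l := (-1)%R) (l' := 0)).
- by rewrite (psiE _ (l' := -1)) //= (shsE _ _ (l' := 0)).
Qed.

Lemma Scol a : exists b, Sprop phi b a.
Proof.
pose p := mkpt (ray_in hA a).
exists (V (phi p) (-1)%R); apply/Sf; exists (V (phi p) 0); split.
- exact: (edgeB (phi p) (l := -1)).
- by rewrite -(gE p (l := 0)).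
Qed.

End Elem.

Section Elem2.
Variables (n m : nat) (A : 'M[nat]_n) (B : 'M[nat]_m).
Hypotheses (hA : goodmx A) (hB : goodmx B).
Variables (phi : pt A -> pt B) (psi : pt B -> pt A) (f : 'I_n -> 'I_n -> 'I_m) (g : 'I_m -> 'I_m -> 'I_n).
Hypotheses (c1 : cancel phi psi) (c2 : cancel psi phi) (hf : locrule phi f) (hg : invlocrule phi g).

Lemma Rchar a b : Rprop phi a b <-> exists p : pt A, V p 0 = a /\ V (phi p) 0 = b.
Proof.
split.
- move=> /(Rf hA hf) [a' [h e]].
  pose p := mkpt (epoint_in hA h).
  exists p; split; first exact: epoint0.
  by rewrite (fE hf p (l' := 1)) //= epoint0 epoint1.
- move=> [p [p0 pb]]; apply/(Rf hA hf); exists (V p 1); split.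
  + by rewrite -p0; apply: edgeA.
  + by rewrite -p0 -(fE hf p (l := 0)).
Qed.

Lemma Schar b a : Sprop phi b a <-> exists p : pt A, V (phi p) (-1)%R = b /\ V p 0 = a.
Proof.
split.
- move=> /(Sf hB c2 hg) [b' [h e]].
  pose q := mkpt (shs_in 1 (epoint_in hB h)).
  exists (psi q); rewrite c2 /=; split.
  + by rewrite (shsE _ _ (l' := 0)) // epoint0.
  + by rewrite (psiE c2 hg _ (l' := -1)) //= (shsE _ _ (l' := 0)) // (shsE _ _ (l' := 1)) // epoint0 epoint1.
- move=> [p [pb p0]]; apply/(Sf hB c2 hg); exists (V (phi p) 0); split.
  + by rewrite -pb; apply: edgeB.
  + by rewrite -p0 -pb -(gE hg p (l := 0)).
Qed.

End Elem2.

Lemma mulmat n m p (P : 'I_n -> 'I_m -> Prop) (Q : 'I_m -> 'I_p -> Prop) (M : 'M[nat]_(n,p)) :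
  zo M -> (forall a c, M a c = 1 <-> exists b, P a b /\ Q b c) ->
  (forall a b b' c, P a b -> Q b c -> P a b' -> Q b' c -> b = b') ->
  M = ((\matrix_(a, b) ind (P a b)) *m (\matrix_(b, c) ind (Q b c)))%R.
Proof.
move=> z hM hu; apply/matrixP => a c; rewrite !mxE.
have [e|ne] := eqVneq (M a c) 1.
- have [b [pb qb]] := (proj1 (hM a c) e).
  rewrite e (bigD1 b) //= big1 ?addr0.
  + by rewrite !mxE (proj2 (ind1 _) pb) (proj2 (ind1 _) qb).
  + move=> k kb; rewrite !mxE.
    case: (excluded_middle_informative (P a k)) => [pk|npk]; last by rewrite (ind0 npk) mul0r.
    case: (excluded_middle_informative (Q k c)) => [qk|nqk]; last by rewrite (ind0 nqk) mulr0.
    by rewrite (hu _ _ _ _ pk qk pb qb) eqxx in kb.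
- have -> : M a c = 0 by move: (z a c) ne; case: (M a c) => [|[|]].
  rewrite big1 // => k _; rewrite !mxE.
  case: (excluded_middle_informative (P a k)) => [pk|npk]; first last.
    by rewrite (ind0 npk) mul0r.
  case: (excluded_middle_informative (Q k c)) => [qk|nqk]; last by rewrite (ind0 nqk) mulr0.
  by exfalso; move/eqP: ne; apply; apply/hM; exists k.
Qed.

Lemma ind_nz (P : Prop) : P -> ind P != 0.
Proof. by move=> h; rewrite (proj2 (ind1 _) h). Qed.

Lemma elem_sse n m (A : 'M[nat]_n) (B : 'M[nat]_m) (phi : pt A -> pt B) :
  goodmx A -> goodmx B -> elementary phi ->
  zo (Rmat phi) /\ nondeg (Rmat phi) /\ zo (Smat phi) /\ nondeg (Smat phi) /\
      A = (Rmat phi *m Smat phi)%R /\ B = (Smat phi *m Rmat phi)%R.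
Proof.
move=> hA hB [[psi [c1 [c2 _]]] [[f hf] [g hg]]].
split; [|split; [|split; [|split; [|split]]]].
- by move=> i j; rewrite mxE ind_le1.
- split.
  + move=> a; have [b hb] := Rrow hA hf a; exists b; by rewrite mxE ind_nz.
  + move=> b; have [a ha] := Rcol hA hB c2 hf b; exists a; by rewrite mxE ind_nz.
- by move=> i j; rewrite mxE ind_le1.
- split.
  + move=> b; have [a ha] := Srow hB c2 hg b; exists a; by rewrite mxE ind_nz.
  + move=> a; have [b hb] := Scol hA hB c2 hg a; exists b; by rewrite mxE ind_nz.
- apply: mulmat; first by case: hA.
  + move=> a c; split.
    * move=> h; have [r s] := K1e hA hB c2 hf hg h; by exists (f a c).
    * by move=> [b [r s]]; case: (K1s hA hB c2 hf hg r s).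
  + move=> a b b' c r s r' s'.
    case: (K1s hA hB c2 hf hg r s) => _ <-; by case: (K1s hA hB c2 hf hg r' s').
- apply: mulmat; first by case: hB.
  + move=> a c; split.
    * move=> h; have [r s] := K2e hA hB c2 hf hg h; by exists (g a c).
    * by move=> [b [r s]]; case: (K2s hA hB c2 hf hg r s).
  + move=> a b b' c r s r' s'.
    case: (K2s hA hB c2 hf hg r s) => _ <-; by case: (K2s hA hB c2 hf hg r' s').
Qed.

Section Comp.
Variables (n1 n2 n3 : nat) (A : 'M[nat]_n1) (B : 'M[nat]_n2) (C : 'M[nat]_n3).
Hypotheses (hA : goodmx A) (hB : goodmx B) (hC : goodmx C).
Variables (phi1 : pt A -> pt B) (psi1 : pt B -> pt A)
  (f1 : 'I_n1 -> 'I_n1 -> 'I_n2) (g1 : 'I_n2 -> 'I_n2 -> 'I_n1).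
Hypotheses (c11 : cancel phi1 psi1) (c21 : cancel psi1 phi1) (hf1 : locrule phi1 f1) (hg1 : invlocrule phi1 g1).
Variables (phi2 : pt B -> pt C) (psi2 : pt C -> pt B)
  (f2 : 'I_n2 -> 'I_n2 -> 'I_n3) (g2 : 'I_n3 -> 'I_n3 -> 'I_n2).
Hypotheses (c12 : cancel phi2 psi2) (c22 : cancel psi2 phi2) (hf2 : locrule phi2 f2) (hg2 : invlocrule phi2 g2).
Variables (phi3 : pt A -> pt C) (psi3 : pt C -> pt A)
  (f3 : 'I_n1 -> 'I_n1 -> 'I_n3) (g3 : 'I_n3 -> 'I_n3 -> 'I_n1).
Hypotheses (c13 : cancel phi3 psi3) (c23 : cancel psi3 phi3) (hf3 : locrule phi3 f3) (hg3 : invlocrule phi3 g3).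
Hypothesis hc : forall p, phi2 (phi1 p) = phi3 p.

Lemma phi1E u : phi1 u = psi2 (phi3 u).
Proof. by rewrite -hc c12. Qed.

Lemma C1s a b c : Rprop phi1 a b -> Rprop phi2 b c ->
  exists p : pt A, V p 0 = a /\ V (phi1 p) 0 = b /\ V (phi3 p) 0 = c.
Proof.
move=> /(Rchar hA hf1) [p1 [p10 p1b]] /(Rchar hB hf2) [q2 [q20 q2c]].
have y_in : inX B (glue 0 (proj1_sig (phi1 p1)) (proj1_sig q2)).
  apply: glue_in; [exact: proj2_sig | exact: proj2_sig |].
  by rewrite p1b -q20; apply: edgeB.
pose y := mkpt y_in.
have ym1 : V y (-1)%R = V (phi1 p1) (-1)%R by rewrite /= glueL.
have y0 : V y 0 = b by rewrite /= glueL.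
have y1 : V y 1 = V q2 1 by rewrite /= glueR.
exists (psi1 y); split; [|split].
- by rewrite (psiE c21 hg1 _ (l' := -1)) // ym1 y0 -p1b -(gE hg1 p1 (l := 0)).
- by rewrite c21.
- by rewrite -hc c21 (fE hf2 _ (l' := 1)) // y0 y1 -q20 -(fE hf2 q2 (l := 0)).
Qed.

Lemma C1u (p p' : pt A) : V p 0 = V p' 0 -> V (phi3 p) 0 = V (phi3 p') 0 ->
  V (phi1 p) 0 = V (phi1 p') 0.
Proof.
move=> ea ec.
have w_in : inX C (glue 0 (proj1_sig (phi3 p)) (proj1_sig (phi3 p'))).
  apply: glue_in; [exact: proj2_sig | exact: proj2_sig |].
  by rewrite ec; apply: edgeB.
pose w := mkpt w_in.
have wm1 : V w (-1)%R = V (phi3 p) (-1)%R by rewrite /= glueL.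
have w0 : V w 0 = V (phi3 p) 0 by rewrite /= glueL.
have w1 : V w 1 = V (phi3 p') 1 by rewrite /= glueR.
pose u := psi3 w.
have u0 : V u 0 = V p 0.
  by rewrite (psiE c23 hg3 _ (l' := -1)) // wm1 w0 -(gE hg3 p (l := 0)).
have u1 : V u 1 = V p' 1.
  by rewrite (psiE c23 hg3 _ (l' := 0)) // w0 w1 ec -(gE hg3 p' (l := 1)).
have e1 : V (phi1 u) 0 = V (phi1 p') 0.
  by rewrite (fE hf1 _ (l' := 1)) // u0 u1 ea -(fE hf1 p' (l := 0)).
have e2 : V (phi1 u) 0 = V (phi1 p) 0.
  rewrite phi1E /u c23 (psiE c22 hg2 _ (l' := -1)) // wm1 w0.
  by rewrite -hc -(gE hg2 (phi1 p) (l := 0)).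
by rewrite -e2 e1.
Qed.

Lemma C1 : Rmat phi3 = (Rmat phi1 *m Rmat phi2)%R.
Proof.
apply: mulmat.
- by move=> i j; rewrite mxE ind_le1.
- move=> a c; rewrite mxE ind1; split.
  + move=> /(Rchar hA hf3) [p [p0 pc]]; exists (V (phi1 p) 0); split.
    * apply/(Rchar hA hf1); by exists p.
    * apply/(Rchar hB hf2); exists (phi1 p); by rewrite hc.
  + move=> [b [r1 r2]]; have [p [p0 [pb pc]]] := C1s r1 r2.
    apply/(Rchar hA hf3); by exists p.
- move=> a b b' c r1 r2 r1' r2'.
  have [p [p0 [pb pc]]] := C1s r1 r2; have [p' [p'0 [p'b p'c]]] := C1s r1' r2'.
  rewrite -pb -p'b; apply: C1u; congruence.
Qed.

Lemma C2s b c a : Rprop phi2 b c -> Sprop phi3 c a ->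
  exists p : pt A, V (phi1 p) (-1)%R = b /\ V (phi3 p) (-1)%R = c /\ V p 0 = a.
Proof.
move=> /(Rchar hB hf2) [q2 [q20 q2c]] /(Schar hC c23 hg3) [p3 [p3c p30]].
have w_in : inX C (glue (-1) (shs 1 (proj1_sig (phi2 q2))) (proj1_sig (phi3 p3))).
  apply: glue_in; [apply: shs_in; exact: proj2_sig | exact: proj2_sig |].
  rewrite (shsE _ _ (l := (-1)%R) (l' := 0)) // q2c -p3c; by apply: edgeB.
pose w := mkpt w_in.
have wm2 : V w (-2)%R = V (phi2 q2) (-1)%R by rewrite /= glueL // (shsE _ _ (l' := (-1)%R)).
have wm1 : V w (-1)%R = c by rewrite /= glueL // (shsE _ _ (l' := 0)).
have w0 : V w 0 = V (phi3 p3) 0 by rewrite /= glueR.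
pose u := psi3 w.
exists u; split; [|split].
- rewrite phi1E /u c23 (psiE c22 hg2 _ (l' := (-2)%R)) // wm2 wm1 -q2c.
  by rewrite -(gE hg2 q2 (l := 0)).
- by rewrite /u c23.
- by rewrite /u (psiE c23 hg3 _ (l' := -1)) // wm1 w0 -p3c -(gE hg3 p3 (l := 0)).
Qed.

Lemma C2u (p p' : pt A) : V (phi1 p) (-1)%R = V (phi1 p') (-1)%R -> V p 0 = V p' 0 ->
  V (phi3 p) (-1)%R = V (phi3 p') (-1)%R.
Proof.
move=> eb ea.
have u_in : inX A (glue 0 (proj1_sig p') (proj1_sig p)).
  apply: glue_in; [exact: proj2_sig | exact: proj2_sig |].
  rewrite -ea; by apply: edgeA.
pose u := mkpt u_in.
have um1 : V u (-1)%R = V p' (-1)%R by rewrite /= glueL.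
have u0 : V u 0 = V p 0 by rewrite /= glueL.
have u1 : V u 1 = V p 1 by rewrite /= glueR.
have e1 : V (phi3 u) (-1)%R = V (phi3 p') (-1)%R.
  by rewrite (fE hf3 _ (l' := 0)) // um1 u0 ea -(fE hf3 p' (l := -1)).
have e2 : V (phi3 u) (-1)%R = V (phi3 p) (-1)%R.
  rewrite -hc (fE hf2 _ (l' := 0)) //.
  rewrite (fE hf1 u (l := -1) (l' := 0)) // (fE hf1 u (l := 0) (l' := 1)) // um1 u0 u1.
  rewrite {1}ea -(fE hf1 p' (l := -1)) // -eb -(fE hf1 p (l := 0)) //.
  by rewrite -(fE hf2 (phi1 p) (l := -1)) // hc.
by rewrite -e2 e1.
Qed.

Lemma C2e b a : Sprop phi1 b a -> exists c, Rprop phi2 b c /\ Sprop phi3 c a.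
Proof.
move=> /(Schar hB c21 hg1) [p [pb p0]].
exists (V (phi3 p) (-1)%R); split.
- apply/(Rchar hB hf2).
  have q_in : inX B (shs (-1) (proj1_sig (phi1 p))) by apply: shs_in; exact: proj2_sig.
  exists (mkpt q_in); split.
  + by rewrite /= (shsE _ _ (l' := (-1)%R)).
  + rewrite (fE hf2 _ (l' := 1)) //= (shsE _ _ (l := 0) (l' := (-1)%R)) // (shsE _ _ (l := 1) (l' := 0)) //.
    by rewrite -(fE hf2 (phi1 p) (l := -1)) // hc.
- apply/(Schar hC c23 hg3); by exists p.
Qed.

Lemma C2 : Smat phi1 = (Rmat phi2 *m Smat phi3)%R.
Proof.
apply: mulmat.
- by move=> i j; rewrite mxE ind_le1.
- move=> b a; rewrite mxE ind1; split; first exact: C2e.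
  move=> [c [r s]]; have [p [pb [pc p0]]] := C2s r s.
  apply/(Schar hB c21 hg1); by exists p.
- move=> b c c' a r s r' s'.
  have [p [pb [pc p0]]] := C2s r s; have [p' [p'b [p'c p'0]]] := C2s r' s'.
  rewrite -pc -p'c; apply: C2u; congruence.
Qed.

Lemma C3e c b : Sprop phi2 c b -> exists a, Sprop phi3 c a /\ Rprop phi1 a b.
Proof.
move=> /(Schar hC c22 hg2) [q [qc qb]].
exists (V (psi1 q) 0); split.
- apply/(Schar hC c23 hg3); exists (psi1 q); by rewrite -hc c21.
- apply/(Rchar hA hf1); exists (psi1 q); by rewrite c21.
Qed.

Lemma C3s c a b : Sprop phi3 c a -> Rprop phi1 a b ->
  exists p : pt A, V (phi3 p) (-1)%R = c /\ V p 0 = a /\ V (phi1 p) 0 = b.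
Proof.
move=> /(Schar hC c23 hg3) [p3 [p3c p30]] /(Rchar hA hf1) [p1 [p10 p1b]].
have x_in : inX A (glue 0 (proj1_sig p3) (proj1_sig p1)).
  apply: glue_in; [exact: proj2_sig | exact: proj2_sig |].
  rewrite p30 -p10; by apply: edgeA.
pose p := mkpt x_in.
have pm1 : V p (-1)%R = V p3 (-1)%R by rewrite /= glueL.
have p0 : V p 0 = a by rewrite /= glueL.
have pp1 : V p 1 = V p1 1 by rewrite /= glueR.
exists p; split; [|split] => //.
- by rewrite (fE hf3 _ (l' := 0)) // pm1 p0 -p30 -(fE hf3 p3 (l := -1)).
- by rewrite (fE hf1 _ (l' := 1)) // p0 pp1 -p10 -(fE hf1 p1 (l := 0)).
Qed.

Lemma C3u (p p' : pt A) : V (phi3 p) (-1)%R = V (phi3 p') (-1)%R -> V (phi1 p) 0 = V (phi1 p') 0 ->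
  V p 0 = V p' 0.
Proof.
move=> ec eb.
have q_in : inX B (glue 0 (proj1_sig (phi1 p')) (proj1_sig (phi1 p))).
  apply: glue_in; [exact: proj2_sig | exact: proj2_sig |].
  rewrite -eb; by apply: edgeB.
pose q := mkpt q_in.
have qm1 : V q (-1)%R = V (phi1 p') (-1)%R by rewrite /= glueL.
have q0 : V q 0 = V (phi1 p') 0 by rewrite /= glueL.
have q1 : V q 1 = V (phi1 p) 1 by rewrite /= glueR.
pose u := psi1 q.
have e1 : V u 0 = V p' 0.
  by rewrite /u (psiE c21 hg1 _ (l' := -1)) // qm1 q0 -(gE hg1 p' (l := 0)).
have e2 : V u 0 = V p 0.
  rewrite (gE hg3 u (l := 0) (l' := -1)) // -hc /u c21.
  rewrite (fE hf2 q (l := -1) (l' := 0)) // (fE hf2 q (l := 0) (l' := 1)) // qm1 q0 q1.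
  rewrite -(fE hf2 (phi1 p') (l := -1)) // -eb -(fE hf2 (phi1 p) (l := 0)) // !hc -ec.
  by rewrite -(gE hg3 p (l := 0)).
by rewrite -e2 e1.
Qed.

Lemma C3 : Smat phi2 = (Smat phi3 *m Rmat phi1)%R.
Proof.
apply: mulmat.
- by move=> i j; rewrite mxE ind_le1.
- move=> c b; rewrite mxE ind1; split; first exact: C3e.
  move=> [a [s r]]; have [p [pc [p0 pb]]] := C3s s r.
  apply/(Schar hC c22 hg2); exists (phi1 p); by rewrite hc.
- move=> c a a' b s r s' r'.
  have [p [pc [p0 pb]]] := C3s s r; have [p' [p'c [p'0 p'b]]] := C3s s' r'.
  rewrite -p0 -p'0; apply: C3u; congruence.
Qed.

End Comp.

Lemma part2 k (x : nsimp k) : nvalid x -> svalid (Fmap x).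
Proof.
move=> [hg [he hc]]; split; [|split].
- exact hg.
- move=> i j h; exact: (elem_sse (hg i) (hg j) (he i j h)).
- move=> i j l hij hjl hil.
  have [[psi1 [c11 [c21 _]]] [[f1 hf1] [g1 hg1]]] := he i j hij.
  have [[psi2 [c12 [c22 _]]] [[f2 hf2] [g2 hg2]]] := he j l hjl.
  have [[psi3 [c13 [c23 _]]] [[f3 hf3] [g3 hg3]]] := he i l hil.
  have hc' := hc i j l hij hjl hil.
  have hAi := hg i; have hAj := hg j; have hAl := hg l.
  split; [|split]; rewrite /=.
  + by symmetry; apply: C1; eassumption.
  + by symmetry; apply: C2; eassumption.
  + by symmetry; apply: C3; eassumption.
Qed.

Section Ident.
Variables (n : nat) (A : 'M[nat]_n).
Hypothesis hA : goodmx A.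

Lemma id_loc : locrule (fun p : pt A => p) (fun a a' => a).
Proof. by []. Qed.
Lemma id_iloc : invlocrule (fun p : pt A => p) (fun b b' => b').
Proof. by []. Qed.

Lemma Rmat_id : Rmat (fun p : pt A => p) = (1%:M)%R.
Proof.
apply/matrixP => a b; rewrite !mxE.
have [e|ne] := eqVneq a b.
- subst; apply/ind1/(Rf hA id_loc); exists (sc hA b); split => //; exact: scP.
- rewrite ind0 //; move/(Rf hA id_loc) => [a' [_ e]]; by rewrite e eqxx in ne.
Qed.

Lemma Smat_id : Smat (fun p : pt A => p) = A.
Proof.
apply/matrixP => b a; rewrite !mxE.
have [e|ne] := eqVneq (A b a) 1.
- rewrite e; apply/ind1/(Sf hA (psi := fun p => p) (fun p => erefl) id_iloc); by exists a.
- rewrite ind0.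
  + case: hA => z _; move: (z b a) ne; case: (A b a) => [|[|]] //.
  + move/(Sf hA (psi := fun p => p) (fun p => erefl) id_iloc) => [b' [h e]].
    by rewrite -e h eqxx in ne.
Qed.
End Ident.

Lemma nmorR_gen k (x : nsimp k) (hg : forall i, goodmx (nA x i)) (a b : 'I_k.+1) (le : a <= b) (c : bool) (e : (a < b) = c) :
  Rmat ((if c as c0 return (a < b) = c0 -> pt (nA x a) -> pt (nA x b)
   then fun h => nphi x h
   else fun h p => eq_rect a (fun t => pt (nA x t)) p b (le_nlt_eq le h)) e) =
  (if c as c0 return (a < b) = c0 -> 'M[nat]_(nsz x a, nsz x b)
   then fun h => Rmat (nphi x h)
   else fun h => eq_rect a (fun t => 'M[nat]_(nsz x a, nsz x t)) (1%:M)%R b (le_nlt_eq le h)) e.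
Proof.
case: c e => e //.
move: (le_nlt_eq le e) => E; subst b => /=.
exact: Rmat_id.
Qed.

Lemma nmorS_gen k (x : nsimp k) (hg : forall i, goodmx (nA x i)) (a b : 'I_k.+1) (le : a <= b) (c : bool) (e : (a < b) = c) :
  Smat ((if c as c0 return (a < b) = c0 -> pt (nA x a) -> pt (nA x b)
   then fun h => nphi x h
   else fun h p => eq_rect a (fun t => pt (nA x t)) p b (le_nlt_eq le h)) e) =
  (if c as c0 return (a < b) = c0 -> 'M[nat]_(nsz x b, nsz x a)
   then fun h => Smat (nphi x h)
   else fun h => eq_rect a (fun t => 'M[nat]_(nsz x t, nsz x a)) (nA x a) b (le_nlt_eq le h)) e.
Proof.
case: c e => e //.
move: (le_nlt_eq le e) => E; subst b => /=.
exact: Smat_id.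
Qed.

Lemma part5 (m k : nat) (f : 'I_m.+1 -> 'I_k.+1) (hf : monotone f) (x : nsimp k) :
  nvalid x -> Fmap (nreidx hf x) = sreidx hf (Fmap x).
Proof.
move=> [hg _].
have eR : (fun (i j : 'I_m.+1) (h : i < j) => Rmat (nmor x (hf i j (ltnW h)))) =
          (fun (i j : 'I_m.+1) (h : i < j) => smorR (Fmap x) (hf i j (ltnW h))).
  apply: functional_extensionality_dep => i; apply: functional_extensionality_dep => j.
  apply: functional_extensionality_dep => h.
  exact: (nmorR_gen hg (hf i j (ltnW h)) (erefl (f i < f j))).
have eS : (fun (i j : 'I_m.+1) (h : i < j) => Smat (nmor x (hf i j (ltnW h)))) =
          (fun (i j : 'I_m.+1) (h : i < j) => smorS (Fmap x) (hf i j (ltnW h))).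
  apply: functional_extensionality_dep => i; apply: functional_extensionality_dep => j.
  apply: functional_extensionality_dep => h.
  exact: (nmorS_gen hg (hf i j (ltnW h)) (erefl (f i < f j))).
rewrite /Fmap /nreidx /sreidx /=.
by rewrite eR eS.
Qed.

Lemma phi_RS n m (A : 'M[nat]_n) (B : 'M[nat]_m) (phi : pt A -> pt B) :
  goodmx A -> goodmx B -> elementary phi -> forall p l,
  Rprop phi (V p l) (V (phi p) l) /\ Sprop phi (V (phi p) l) (V p (l + 1)%R).
Proof.
move=> hA hB [[psi [c1 [c2 _]]] [[f hf] [g hg]]] p l; split.
- apply/(Rf hA hf); exists (V p (l+1)%R); split; [exact: (proj2_sig p) | by rewrite hf].
- apply/(Sf hB c2 hg); exists (V (phi p) (l+1)%R); split; [exact: (proj2_sig (phi p)) |].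
  by rewrite -(gE hg p (l := (l+1)%R)) // addrK.
Qed.

Lemma phi_det n m (A : 'M[nat]_n) (B : 'M[nat]_m) (phi : pt A -> pt B) :
  goodmx A -> goodmx B -> elementary phi -> forall p l b,
  Rprop phi (V p l) b -> Sprop phi b (V p (l + 1)%R) -> b = V (phi p) l.
Proof.
move=> hA hB [[psi [c1 [c2 _]]] [[f hf] [g hg]]] p l b r s.
case: (K1s hA hB c2 hf hg r s) => _ <-; by rewrite hf.
Qed.

Lemma part3 k (x y : nsimp k) : nvalid x -> nvalid y -> Fmap x = Fmap y -> x = y.
Proof.
move: x y => [sz A phi] [sz' A' phi'] [hg [he _]] [hg' [he' _]] H.
rewrite /Fmap /= in H.
injection H => HS HR HA Hsz.
subst sz'.
apply inj_pair2 in HA; apply inj_pair2 in HR; apply inj_pair2 in HS.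
subst A'.
have -> : phi = phi'; last by [].
apply: functional_extensionality_dep => i; apply: functional_extensionality_dep => j.
apply: functional_extensionality_dep => h; apply: functional_extensionality => p.
apply: pt_eq => l.
have eR := f_equal (fun F => F i j h) HR; have eS := f_equal (fun F => F i j h) HS.
simpl in eR, eS.
have [r s] := phi_RS (hg i) (hg j) (he' i j h) p l.
apply: esym; apply: (phi_det (hg i) (hg j) (he i j h)).
- apply/ind1; move/matrixP: eR => eR; have := eR (V p l) (V (phi' i j h p) l).
  rewrite /= !mxE => ->; exact/ind1.
- apply/ind1; move/matrixP: eS => eS; have := eS (V (phi' i j h p) l) (V p (l + 1)%R).
  rewrite /= !mxE => ->; exact/ind1.
Qed.

Lemma part1 n m (A : 'M[nat]_n) (B : 'M[nat]_m) : goodmx A -> goodmx B ->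
  (forall y, Xset A y <-> Xset B y) ->
  existT (fun t => 'M[nat]_t) n A = existT (fun t => 'M[nat]_t) m B.
Proof.
move=> hA hB H.
have sub : forall n0 m0 (A0 : 'M[nat]_n0) (B0 : 'M[nat]_m0), goodmx A0 ->
    (forall y, Xset A0 y -> Xset B0 y) -> n0 <= m0.
  move=> n0 m0 A0 B0 hA0 H0.
  case: n0 A0 hA0 H0 => [//|n0] A0 hA0 H0.
  have [x [hx E]] := H0 _ (ex_intro _ (ray hA0 ord_max) (conj (ray_in hA0 ord_max) erefl)).
  have := f_equal (fun y => y 0%R) E => /= ->.
  exact: ltn_ord.
have enm : n = m.
  apply/eqP; rewrite eqn_leq (sub _ _ _ _ hA (fun y => proj1 (H y))).
  exact: (sub _ _ _ _ hB (fun y => proj2 (H y))).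
subst m.
have edge : forall (A0 B0 : 'M[nat]_n), goodmx A0 ->
    (forall y, Xset A0 y -> Xset B0 y) -> forall i j, A0 i j = 1 -> B0 i j = 1.
  move=> A0 B0 hA0 H0 i j h.
  have [x [hx E]] := H0 _ (ex_intro _ (epoint hA0 i j) (conj (epoint_in hA0 h) erefl)).
  have e0 : x 0%R = i.
    apply: val_inj; have := f_equal (fun y => y 0%R) E; by rewrite /= epoint0 => <-.
  have e1 : x 1%R = j.
    apply: val_inj; have := f_equal (fun y => y 1%R) E; by rewrite /= epoint1 => <-.
  rewrite -e0 -e1; exact: (hx 0%R).
suff -> : A = B by [].
apply/matrixP => i j.
have [e|ne] := eqVneq (A i j) 1.
- by rewrite e (edge A B hA (fun y => proj1 (H y)) i j e).
- have e0 : A i j = 0 by case: hA => z _; move: (z i j) ne; case: (A i j) => [|[|]].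
  rewrite e0; case: (hB) => z _; move: (z i j); case E: (B i j) => [|[|]] // _.
  by rewrite (edge B A hB (fun y => proj2 (H y)) i j E) in ne.
Qed.

Lemma prod_ge1 n m p (M : 'M[nat]_(n,m)) (N : 'M[nat]_(m,p)) i k j :
  M i k = 1 -> N k j = 1 -> 0 < (M *m N)%R i j.
Proof.
move=> e1 e2; rewrite mxE (bigD1 k) //= e1 e2.
by rewrite [X in 0 < X]/(GRing.add _ _) /=.
Qed.

Lemma prod_uniq n m p (M : 'M[nat]_(n,m)) (N : 'M[nat]_(m,p)) i k k' j :
  (M *m N)%R i j <= 1 -> M i k = 1 -> N k j = 1 -> M i k' = 1 -> N k' j = 1 -> k = k'.
Proof.
move=> le e1 e2 e3 e4; apply/eqP; apply: contraLR le => ne.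
rewrite mxE (bigD1 k) //= (bigD1 k') //=; last by rewrite eq_sym.
rewrite e1 e2 e3 e4.
have E : forall x : nat, (1 * 1 + x)%R = x.+1 by [].
by rewrite !E.
Qed.

Lemma prod_ex n m p (M : 'M[nat]_(n,m)) (N : 'M[nat]_(m,p)) i j :
  zo M -> zo N -> (M *m N)%R i j != 0 -> exists k, M i k = 1 /\ N k j = 1.
Proof.
move=> zM zN ne; apply: NNPP => nex; move/eqP: ne; apply.
rewrite mxE big1 // => k _.
have [e1|n1] := eqVneq (M i k) 1; last first.
  have -> : M i k = 0 by move: (zM i k) n1; case: (M i k) => [|[|]].
  by rewrite mul0r.
have [e2|n2] := eqVneq (N k j) 1; last first.
  have -> : N k j = 0 by move: (zN k j) n2; case: (N k j) => [|[|]].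
  by rewrite mulr0.
by exfalso; apply: nex; exists k.
Qed.

Definition sse n m (A : 'M[nat]_n) (B : 'M[nat]_m) (R : 'M[nat]_(n, m)) (S : 'M[nat]_(m, n)) : Prop :=
  goodmx A /\ goodmx B /\ zo R /\ nondeg R /\ zo S /\ nondeg S /\ A = (R *m S)%R /\ B = (S *m R)%R.

Section Constr.
Variables (n m : nat) (A : 'M[nat]_n) (B : 'M[nat]_m) (R : 'M[nat]_(n, m)) (S : 'M[nat]_(m, n)).
Hypothesis H : sse A B R S.

Lemma sse_hA : goodmx A. Proof. by case: H. Qed.
Lemma sse_hB : goodmx B. Proof. by case: H => _ []. Qed.
Lemma sse_zR : zo R. Proof. by case: H => _ [_ []]. Qed.
Lemma sse_nR : nondeg R. Proof. by case: H => _ [_ [_ []]]. Qed.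
Lemma sse_zS : zo S. Proof. by case: H => _ [_ [_ [_ []]]]. Qed.
Lemma sse_nS : nondeg S. Proof. by case: H => _ [_ [_ [_ [_ []]]]]. Qed.
Lemma sse_eA : A = (R *m S)%R. Proof. by case: H => _ [_ [_ [_ [_ [_ []]]]]]. Qed.
Lemma sse_eB : B = (S *m R)%R. Proof. by case: H => _ [_ [_ [_ [_ [_ []]]]]]. Qed.

Lemma zoA : zo A. Proof. by case: sse_hA. Qed.
Lemma zoB : zo B. Proof. by case: sse_hB. Qed.

Definition floc (a a' : 'I_n) : 'I_m :=
  odflt (xchoose (proj1 sse_nR a)) [pick b | (R a b == 1) && (S b a' == 1)].
Definition gloc (b b' : 'I_m) : 'I_n :=
  odflt (xchoose (proj1 sse_nS b)) [pick a | (S b a == 1) && (R a b' == 1)].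

Lemma flocP a a' : A a a' = 1 -> R a (floc a a') = 1 /\ S (floc a a') a' = 1.
Proof.
move=> h; rewrite /floc; case: pickP => [b /andP [/eqP r /eqP s] | none] //=.
exfalso; have : (R *m S)%R a a' != 0 by rewrite -sse_eA h.
move/(prod_ex sse_zR sse_zS) => [b [r s]].
by move: (none b); rewrite r s eqxx.
Qed.

Lemma flocU a a' b : R a b = 1 -> S b a' = 1 -> floc a a' = b.
Proof.
move=> r s.
have eA : A a a' = 1.
  apply: zo1; first exact: zoA.
  by rewrite sse_eA -lt0n (prod_ge1 r s).
have [r' s'] := flocP eA.
apply: (prod_uniq (M := R) (N := S) (i := a) (j := a')) => //.
by rewrite -sse_eA eA.
Qed.

Lemma glocP b b' : B b b' = 1 -> S b (gloc b b') = 1 /\ R (gloc b b') b' = 1.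
Proof.
move=> h; rewrite /gloc; case: pickP => [a /andP [/eqP r /eqP s] | none] //=.
exfalso; have : (S *m R)%R b b' != 0 by rewrite -sse_eB h.
move/(prod_ex sse_zS sse_zR) => [a [r s]].
by move: (none a); rewrite r s eqxx.
Qed.

Lemma glocU b b' a : S b a = 1 -> R a b' = 1 -> gloc b b' = a.
Proof.
move=> r s.
have eB : B b b' = 1.
  apply: zo1; first exact: zoB.
  by rewrite sse_eB -lt0n (prod_ge1 r s).
have [r' s'] := glocP eB.
apply: (prod_uniq (M := S) (N := R) (i := b) (j := b')) => //.
by rewrite -sse_eB eB.
Qed.

Lemma phiC_in (p : pt A) : inX B (fun l => floc (V p l) (V p (l + 1)%R)).
Proof.
move=> l /=.
have [_ s] := flocP (edgeA p (l := l) erefl).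
have [r _] := flocP (edgeA p (l := (l + 1)%R) erefl).
apply: zo1; first exact: zoB.
by rewrite sse_eB -lt0n (prod_ge1 s r).
Qed.

Definition phiC (p : pt A) : pt B := exist (inX B) _ (phiC_in p).

Lemma psiC_in (q : pt B) : inX A (fun l => gloc (V q (l - 1)%R) (V q l)).
Proof.
move=> l /=; rewrite addrK.
have [_ r] := glocP (edgeB q (l := (l - 1)%R) (l' := l) (esym (subrK (1 : int) l))).
have [s _] := glocP (edgeB q (l := l) erefl).
apply: zo1; first exact: zoA.
by rewrite sse_eA -lt0n (prod_ge1 r s).
Qed.

Definition psiC (q : pt B) : pt A := exist (inX A) _ (psiC_in q).

Lemma cC1 : cancel phiC psiC.
Proof.
move=> p; apply: pt_eq => l /=; rewrite subrK.
have [_ s] := flocP (edgeA p (l := (l - 1)%R) (l' := l) (esym (subrK (1 : int) l))).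
have [r _] := flocP (edgeA p (l := l) erefl).
exact: glocU s r.
Qed.

Lemma cC2 : cancel psiC phiC.
Proof.
move=> q; apply: pt_eq => l /=; rewrite addrK.
have [_ r] := glocP (edgeB q (l := (l - 1)%R) (l' := l) (esym (subrK (1 : int) l))).
have [s _] := glocP (edgeB q (l := l) erefl).
exact: flocU r s.
Qed.

Lemma elemC : elementary phiC.
Proof.
split; [|split].
- exists psiC; split; [exact: cC1 | split; [exact: cC2 | split; [|split]]].
  + move=> p N; exists N.+1 => q ag l hl /=.
    by rewrite (ag l) ?(ag (l + 1)%R) //; lia.
  + move=> q N; exists N.+1 => q' ag l hl /=.
    by rewrite (ag l) ?(ag (l - 1)%R) //; lia.
  + by move=> p; apply: pt_eq.
- by exists floc.
- exists gloc => p i; by rewrite -{1}(cC1 p).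
Qed.

Lemma RmatC : Rmat phiC = R.
Proof.
apply/matrixP => a b; rewrite mxE.
have hf : locrule phiC floc by [].
have [e|ne] := eqVneq (R a b) 1.
- rewrite e; apply/ind1/(Rf sse_hA hf).
  have [a' ha'] := proj1 sse_nS b.
  have s := zo1 sse_zS ha'.
  exists a'; split; last exact: flocU.
  apply: zo1; first exact: zoA.
  by rewrite sse_eA -lt0n (prod_ge1 e s).
- rewrite ind0.
  + by move: (sse_zR a b) ne; case: (R a b) => [|[|]].
  + move/(Rf sse_hA hf) => [a' [h fe]].
    have [r _] := flocP h; rewrite fe in r; by rewrite r eqxx in ne.
Qed.

Lemma SmatC : Smat phiC = S.
Proof.
apply/matrixP => b a; rewrite mxE.
have hg : invlocrule phiC gloc by move=> p i; rewrite -{1}(cC1 p).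
have [e|ne] := eqVneq (S b a) 1.
- rewrite e; apply/ind1/(Sf sse_hB cC2 hg).
  have [b' hb'] := proj1 sse_nR a.
  have r := zo1 sse_zR hb'.
  exists b'; split; last exact: glocU.
  apply: zo1; first exact: zoB.
  by rewrite sse_eB -lt0n (prod_ge1 e r).
- rewrite ind0.
  + by move: (sse_zS b a) ne; case: (S b a) => [|[|]].
  + move/(Sf sse_hB cC2 hg) => [b' [h ge]].
    have [s _] := glocP h; rewrite ge in s; by rewrite s eqxx in ne.
Qed.

End Constr.

Lemma compC n1 n2 n3 (A : 'M[nat]_n1) (B : 'M[nat]_n2) (C : 'M[nat]_n3)
  R1 S1 R2 S2 R3 S3 (H1 : sse A B R1 S1) (H2 : sse B C R2 S2) (H3 : sse A C R3 S3) :
  (R1 *m R2)%R = R3 -> (R2 *m S3)%R = S1 -> (S3 *m R1)%R = S2 ->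
  forall p, phiC H2 (phiC H1 p) = phiC H3 p.
Proof.
move=> E1 E2 E3 p; apply: pt_eq => l /=.
set a0 := V p l; set a1 := V p (l + 1)%R; set a2 := V p (l + 1 + 1)%R.
have e01 : A a0 a1 = 1 by apply: edgeA.
have e12 : A a1 a2 = 1 by apply: edgeA.
have eB : B (floc H1 a0 a1) (floc H1 a1 a2) = 1 := proj2_sig (phiC H1 p) l.
have [r0 s0] := flocP H1 e01.
have [r1 s1] := flocP H1 e12.
have [r2 s2] := flocP H2 eB.
apply: esym; apply: flocU.
- apply: zo1; first exact: sse_zR H3.
  by rewrite -E1 -lt0n (prod_ge1 r0 r2).
- have : (R2 *m S3)%R (floc H1 a0 a1) a1 != 0 by rewrite E2 s0.
  move/(prod_ex (sse_zR H2) (sse_zS H3)) => [c' [r' s']].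
  have s2' : S2 c' (floc H1 a1 a2) = 1.
    apply: zo1; first exact: sse_zS H2.
    by rewrite -E3 -lt0n (prod_ge1 s' r1).
  have -> : floc H2 (floc H1 a0 a1) (floc H1 a1 a2) = c'; last exact: s'.
  apply: (prod_uniq (M := R2) (N := S2)) r2 s2 r' s2'.
  by rewrite -(sse_eA H2) (zoA H2).
Qed.

Lemma part4 k (s : ssimp k) : svalid s -> exists x : nsimp k, nvalid x /\ Fmap x = s.
Proof.
case: s => sz Bm Rm Sm [hg [he hc]] /=.
have Hs : forall (i j : 'I_k.+1) (h : i < j), sse (Bm i) (Bm j) (Rm i j h) (Sm i j h).
  move=> i j h; have [z1 [n1 [z2 [n2 [e1 e2]]]]] := he i j h.
  split; first exact: hg. split; first exact: hg.
  exact: (conj z1 (conj n1 (conj z2 (conj n2 (conj e1 e2))))).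
exists (@NSimp k sz Bm (fun i j h => phiC (Hs i j h))); split.
- split; first exact: hg.
  split.
  + move=> i j h; exact: elemC.
  + move=> i j l hij hjl hil p /=; have [E1 [E2 E3]] := hc i j l hij hjl hil; exact: compC.
- rewrite /Fmap /=.
  have eR : (fun (i j : 'I_k.+1) (h : i < j) => Rmat (phiC (Hs i j h))) = Rm.
    apply: functional_extensionality_dep => i; apply: functional_extensionality_dep => j.
    apply: functional_extensionality_dep => h; exact: RmatC.
  have eS : (fun (i j : 'I_k.+1) (h : i < j) => Smat (phiC (Hs i j h))) = Sm.
    apply: functional_extensionality_dep => i; apply: functional_extensionality_dep => j.
    apply: functional_extensionality_dep => h; exact: SmatC.
  by rewrite eR eS.
Qed.

Theorem mainTheorem12 :
  (* the object map X_A |-> A is well defined: X_A determines A *)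
  (forall (n m : nat) (A : 'M[nat]_n) (B : 'M[nat]_m),
      goodmx A -> goodmx B -> (forall y, Xset A y <-> Xset B y) ->
      existT (fun t => 'M[nat]_t) n A = existT (fun t => 'M[nat]_t) m B) /\
  (* the map sends simplices to simplices *)
  (forall (k : nat) (x : nsimp k), nvalid x -> svalid (Fmap x)) /\
  (* it is injective on k-simplices *)
  (forall (k : nat) (x y : nsimp k), nvalid x -> nvalid y -> Fmap x = Fmap y -> x = y) /\
  (* it is surjective on k-simplices *)
  (forall (k : nat) (s : ssimp k), svalid s -> exists x : nsimp k, nvalid x /\ Fmap x = s) /\
  (* it is simplicial: commutes with all simplicial operators (faces, degeneracies) *)
  (forall (m k : nat) (f : 'I_m.+1 -> 'I_k.+1) (hf : monotone f) (x : nsimp k),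
      nvalid x -> Fmap (nreidx hf x) = sreidx hf (Fmap x)).
Proof.
split; first exact: part1.
split; first exact: part2.
split; first exact: part3.
split; first exact: part4.
exact: part5.
Qed.
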